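(* Let $d\in\{2,3\}$, $\kappa>0$, $\sigma^{-1}=2\kappa$, $\rho(s)=(2/s)^{d/2}\Gamma(d/2+1)J_{d/2}(s)$ (with $\rho(0)=1$), and $k(t)=\rho(\sigma^{-1}|t|)$ for $t\in\mathbb{R}^d$. Let $\mathfrak{d}(x,x')=\sigma^{-1}|x-x'|/\sqrt{d+2}$ and $|v|_\ast=\sigma^{-1}|v|/\sqrt{d+2}$ for $v\in\mathbb{R}^d$. Then for all $x,x'\in\mathbb{R}^d$ with $\mathfrak{d}(x,x')\le r_{\mathrm{near}}:=1/\sqrt5$ and all $v\in\mathbb{R}^d$, $$-v^T\nabla^2k(x-x')\,v\ \ge\ \bar\epsilon_2\,|v|_\ast^2,\qquad\text{where }\bar\epsilon_2:=0.6<r_{\mathrm{near}}^{-2}.$$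
   Context: $J_{d/2}$ is the Bessel function of the first kind of order $d/2$. The function $k$ is the kernel $K(x,x')=k(x-x')=\int_{B(0,2\kappa)}e^{i\langle\omega,x-x'\rangle}\,d\Lambda(\omega)$ with $\Lambda$ uniform on $B(0,2\kappa)$; it is smooth on $\mathbb{R}^d$. The quantity $v^T\nabla^2k(x-x')v$ is the paper's $K^{(02)}(x,x')[v,v]$, $\mathfrak{d}$ is its Fisher metric distance and $|v|_\ast$ its norm $|v|_x$. *)

(* Defs.v *)
From Stdlib Require Import Reals Lra.
From Coquelicot Require Import Coquelicot.
Open Scope R_scope.

(* Vectors of R^d are represented as functions nat -> R; only the
   coordinates 0..d-1 are used by every definition below. *)

Fixpoint sumd (n : nat) (f : nat -> R) : R :=
  match n with
  | O => 0
  | S m => sumd m f + f m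
  end.

Definition vnorm (d : nat) (x : nat -> R) : R :=
  sqrt (sumd d (fun i => x i ^ 2)).

Definition vsub (x y : nat -> R) : nat -> R := fun i => x i - y i.

(* rising product (nu+1)(nu+2)...(nu+m) = Gamma(nu+m+1)/Gamma(nu+1) *)
Fixpoint rising (nu : R) (m : nat) : R :=
  match m with
  | O => 1
  | S p => rising nu p * (nu + INR (S p))
  end.

(* rho(s) = (2/s)^nu Gamma(nu+1) J_nu(s) with nu = d/2, written out from the
   power series J_nu(s) = sum_m (-1)^m /(m! Gamma(m+nu+1)) (s/2)^(2m+nu);
   this gives rho(s) = sum_m (-1)^m (s^2/4)^m / (m! (nu+1)...(nu+m)),
   an entire function with rho(0) = 1. *)
Definition rho (d : nat) (s : R) : R :=
  let nu := INR d / 2 in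
  Series (fun m => (-1) ^ m * (s ^ 2 / 4) ^ m / (INR (Factorial.fact m) * rising nu m)).

Definition kern (d : nat) (kappa : R) (t : nat -> R) : R :=
  rho d (2 * kappa * vnorm d t).

Definition partial (f : (nat -> R) -> R) (i : nat) (t : nat -> R) : R :=
  Derive (fun h => f (fun j => if Nat.eqb j i then t j + h else t j)) 0.

Definition hess_form (d : nat) (f : (nat -> R) -> R) (t v : nat -> R) : R :=
  sumd d (fun i => sumd d (fun j =>
    v i * v j * partial (fun y => partial f j y) i t)).

Definition fdist (d : nat) (kappa : R) (x x' : nat -> R) : R :=
  2 * kappa * vnorm d (vsub x x') / sqrt (INR d + 2).

Definition fnorm (d : nat) (kappa : R) (v : nat -> R) : R :=
  2 * kappa * vnorm d v / sqrt (INR d + 2).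

(* Main.v *)
Require Import Defs.
From Stdlib Require Import Reals Lra Lia.
From Coquelicot Require Import Coquelicot.
Open Scope R_scope.


Lemma rising_pos nu n : 0 <= nu -> 0 < rising nu n.
Proof.
  intro H; induction n. simpl; lra.
  change (rising nu (S n)) with (rising nu n * (nu + INR (S n))).
  apply Rmult_lt_0_compat; auto. rewrite S_INR. pose proof (pos_INR n). lra.
Qed.

Definition pc (nu : R) (n : nat) : R := / (4 ^ n * INR (Factorial.fact n) * rising nu n).
Definition ac (nu : R) (n : nat) : R := (-1) ^ n * pc nu n.

Lemma pc_pos nu n : 0 <= nu -> 0 < pc nu n.
Proof.
  intro H; unfold pc. apply Rinv_0_lt_compat.
  apply Rmult_lt_0_compat; [apply Rmult_lt_0_compat|].
  apply pow_lt; lra. apply lt_0_INR. apply Factorial.lt_O_fact. now apply rising_pos.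
Qed.

Lemma pc_S nu n : 0 <= nu -> pc nu (S n) = pc nu n / (4 * (INR n + 1) * (nu + INR n + 1)).
Proof.
  intro H; unfold pc. rewrite fact_simpl, mult_INR. change (rising nu (S n)) with (rising nu n * (nu + INR (S n))). simpl pow.
  rewrite !S_INR. pose proof (rising_pos nu n H). pose proof (pos_INR n).
  assert (0 < INR (Factorial.fact n)) by (apply lt_0_INR; apply Factorial.lt_O_fact).
  assert (0 < 4 ^ n) by (apply pow_lt; lra).
  field. repeat split; lra.
Qed.

Lemma ac_radius nu : 0 <= nu -> CV_radius (ac nu) = p_infty.
Proof.
  intro H. apply CV_radius_infinite_DAlembert.
  - intro n; unfold ac. pose proof (pc_pos nu n H). apply Rmult_integral_contrapositive; split.
    apply pow_nonzero; lra. lra.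
  - apply is_lim_seq_ext with (fun n => / (4 * (INR n + 1) * (nu + INR n + 1))).
    + intro n. pose proof (pc_pos nu n H). pose proof (pos_INR n).
      assert (E : ac nu (S n) / ac nu n = - / (4 * (INR n + 1) * (nu + INR n + 1))).
      { unfold ac. rewrite pc_S by auto. simpl pow. field. repeat split; try lra. apply pow_nonzero; lra. }
      rewrite E, Rabs_Ropp. symmetry. apply Rabs_right. left. apply Rinv_0_lt_compat.
      apply Rmult_lt_0_compat; try lra.
    + replace (Finite 0) with (Rbar_inv p_infty) by reflexivity.
      apply is_lim_seq_inv; [|discriminate].
      apply is_lim_seq_le_p_loc with INR; [|apply is_lim_seq_INR].
      exists 0%nat. intros n _. pose proof (pos_INR n). nra.
Qed.

Lemma div_le_1 a b : 0 < b -> a <= b -> a / b <= 1.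
Proof.
  intros. unfold Rdiv. replace 1 with (b * / b) by (field; lra).
  apply Rmult_le_compat_r; [left; apply Rinv_0_lt_compat|]; lra.
Qed.

Lemma alt_bounds b l : (forall n, b (S n) <= b n) -> is_series (tg_alt b) l ->
  b 0%nat - b 1%nat <= l <= b 0%nat.
Proof.
  intros Hd Hs.
  assert (Hc : Un_cv b 0).
  { apply is_lim_seq_Reals. apply is_lim_seq_abs_0.
    assert (L : is_lim_seq (tg_alt b) 0) by (apply ex_series_lim_0; exists l; exact Hs).
    apply is_lim_seq_abs_0 in L.
    eapply is_lim_seq_ext; [|exact L].
    intro n. unfold tg_alt. rewrite Rabs_mult, pow_1_abs. ring. }
  apply is_series_Reals in Hs.
  pose proof (alternated_series_ineq b l 0 Hd Hc Hs) as H.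
  simpl in H. unfold tg_alt in H. simpl in H. lra.
Qed.

Lemma G1_series nu u : 0 <= nu ->
  is_series (tg_alt (fun n => INR (S n) * pc nu (S n) * u ^ n)) (- PSeries (PS_derive (ac nu)) u).
Proof.
  intro H.
  assert (HR : Rbar_lt (Rabs u) (CV_radius (ac nu))) by (rewrite ac_radius; easy).
  pose proof (PSeries_correct _ _ (ex_pseries_derive _ _ HR)) as P.
  apply is_pseries_R in P. apply is_series_opp in P.
  eapply is_series_ext; [|exact P].
  intro n. unfold tg_alt, PS_derive, ac. replace (n+1)%nat with (S n) by lia.
  match goal with |- ?a = ?b => change (@eq R a b) end. change (opp ?x) with (- x). simpl pow. ring.
Qed.

Lemma G2_series nu u : 0 <= nu ->
  is_series (tg_alt (fun n => INR (S n) * INR (S (S n)) * pc nu (S (S n)) * u ^ n))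
    (PSeries (PS_derive (PS_derive (ac nu))) u).
Proof.
  intro H.
  assert (HR : Rbar_lt (Rabs u) (CV_radius (PS_derive (ac nu))))
    by (rewrite CV_radius_derive, ac_radius; easy).
  pose proof (PSeries_correct _ _ (ex_pseries_derive _ _ HR)) as P.
  apply is_pseries_R in P.
  eapply is_series_ext; [|exact P].
  intro n. unfold tg_alt, PS_derive, ac. replace (n+1)%nat with (S n) by lia.
  replace (S n + 1)%nat with (S (S n)) by lia. match goal with |- ?a = ?b => change (@eq R a b) end. simpl pow. ring.
Qed.

Lemma G1_bound nu u : 0 <= nu -> 0 <= u <= 4 ->
  pc nu 1 - 2 * pc nu 2 * u <= - PSeries (PS_derive (ac nu)) u.
Proof.
  intros H Hu.
  assert (B := G1_series nu u H). apply alt_bounds in B. simpl in B. lra.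
  {
    intro n. rewrite (pc_S nu (S n) H).
    pose proof (pc_pos nu (S n) H). pose proof (pos_INR n).
    assert (0 <= u ^ n) by (apply pow_le; lra).
    rewrite !S_INR. simpl pow.
    set (q := pc nu (S n)) in *. set (w := u ^ n) in *.
    assert (E : (INR n + 1 + 1) * (q / (4 * (INR n + 1 + 1) * (nu + (INR n + 1) + 1))) * (u * w)
      = q * w * (u / (4 * (nu + INR n + 2)))) by (field; lra).
    rewrite E.
    assert (u / (4 * (nu + INR n + 2)) <= 1).
    { apply div_le_1; lra. }
    assert (0 <= q * w) by (apply Rmult_le_pos; lra).
    nra. }
Qed.

Lemma G2_bound nu u : 0 <= nu -> 0 <= u <= 4 ->
  PSeries (PS_derive (PS_derive (ac nu))) u <= 2 * pc nu 2.
Proof.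
  intros H Hu.
  assert (B := G2_series nu u H). apply alt_bounds in B. simpl in B. lra.
  {
    intro n. rewrite (pc_S nu (S (S n)) H).
    pose proof (pc_pos nu (S (S n)) H). pose proof (pos_INR n).
    assert (0 <= u ^ n) by (apply pow_le; lra).
    rewrite !S_INR. simpl pow.
    set (q := pc nu (S (S n))) in *. set (w := u ^ n) in *.
    assert (E : (INR n + 1 + 1) * (INR n + 1 + 1 + 1) * (q / (4 * (INR n + 1 + 1 + 1) * (nu + (INR n + 1 + 1) + 1))) * (u * w)
      = (INR n + 1 + 1) * q * w * (u / (4 * (nu + INR n + 3)))) by (field; lra).
    rewrite E.
    assert (u / (4 * (nu + INR n + 3)) <= 1).
    { apply div_le_1; lra. }
    assert (0 <= (INR n + 1 + 1) * q * w) by (apply Rmult_le_pos; [apply Rmult_le_pos|]; lra).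
    nra. }
Qed.

Lemma pc1 nu : 0 <= nu -> pc nu 1 = / (4 * (nu + 1)).
Proof. intro H. unfold pc. simpl. field. lra. Qed.
Lemma pc2 nu : 0 <= nu -> pc nu 2 = / (32 * (nu + 1) * (nu + 2)).
Proof. intro H. unfold pc. simpl. field. lra. Qed.

Definition Sq n (y : nat -> R) := sumd n (fun i => y i ^ 2).

Lemma sumd_ext n f g : (forall i, (i < n)%nat -> f i = g i) -> sumd n f = sumd n g.
Proof.
  induction n; intro H; simpl. reflexivity.
  rewrite IHn, H; auto; intros; apply H; lia.
Qed.

Lemma Sq_nonneg n y : 0 <= Sq n y.
Proof. unfold Sq; induction n; cbn [sumd]. lra. pose proof (pow2_ge_0 (y n)). lra. Qed.

Lemma S_shift n i y h :
  sumd n (fun k => (if Nat.eqb k i then y k + h else y k) ^ 2)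
  = Sq n y + (if Nat.ltb i n then 2 * h * y i + h ^ 2 else 0).
Proof.
  unfold Sq; induction n; cbn [sumd]. simpl; lra.
  rewrite IHn.
  destruct (Nat.eqb_spec n i); destruct (Nat.ltb_spec i n); destruct (Nat.ltb_spec i (S n));
    try lia; subst; ring.
Qed.

Lemma rho_eq d s : rho d s = PSeries (ac (INR d / 2)) (s ^ 2).
Proof.
  unfold rho, PSeries. cbv zeta. apply Series_ext. intro m.
  unfold ac, pc.
  assert (0 < rising (INR d / 2) m) by (apply rising_pos; pose proof (pos_INR d); lra).
  assert (0 < INR (Factorial.fact m)) by (apply lt_0_INR; apply Factorial.lt_O_fact).
  assert (0 < 4 ^ m) by (apply pow_lt; lra).
  unfold Rdiv. rewrite Rpow_mult_distr, pow_inv. field. lra.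
Qed.

Lemma kern_eq d kappa y :
  kern d kappa y = PSeries (ac (INR d / 2)) ((2 * kappa) ^ 2 * Sq d y).
Proof.
  unfold kern, vnorm. rewrite rho_eq. f_equal.
  rewrite Rpow_mult_distr, pow2_sqrt. reflexivity. apply Sq_nonneg.
Qed.

Lemma comp_deriv (F F' : R -> R) C n i y :
  (forall z, is_derive F z (F' z)) -> (i < n)%nat ->
  is_derive (fun h => F (C * sumd n (fun k => (if Nat.eqb k i then y k + h else y k) ^ 2))) 0
    (F' (C * Sq n y) * (C * (2 * y i))).
Proof.
  intros HF Hi.
  apply is_derive_ext with (fun h => F (C * (Sq n y + (2 * h * y i + h ^ 2)))).
  { intro h. rewrite S_shift. apply Nat.ltb_lt in Hi. rewrite Hi. reflexivity. }
  assert (Hg : is_derive (fun h => C * (Sq n y + (2 * h * y i + h ^ 2))) 0 (C * (2 * y i))).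
  { auto_derive; auto. ring. }
  pose proof (is_derive_comp F _ 0 _ _ (HF _) Hg) as H.
  cbv beta in H. replace (C * (Sq n y + (2 * 0 * y i + 0 ^ 2))) with (C * Sq n y) in H by ring.
  replace (F' (C * Sq n y) * (C * (2 * y i))) with (scal (C * (2 * y i)) (F' (C * Sq n y))).
  exact H. change (scal (C * (2 * y i)) (F' (C * Sq n y))) with ((C * (2 * y i)) * (F' (C * Sq n y))). apply Rmult_comm.
Qed.

Definition G0 d := PSeries (ac (INR d / 2)).
Definition G1 d := PSeries (PS_derive (ac (INR d / 2))).
Definition G2 d := PSeries (PS_derive (PS_derive (ac (INR d / 2)))).

Lemma dG0 d z : is_derive (G0 d) z (G1 d z).
Proof.
  apply is_derive_PSeries. rewrite ac_radius. easy. pose proof (pos_INR d); lra.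
Qed.

Lemma dG1 d z : is_derive (G1 d) z (G2 d z).
Proof.
  apply is_derive_PSeries. rewrite CV_radius_derive, ac_radius. easy. pose proof (pos_INR d); lra.
Qed.

Lemma P1 d kappa j y : (j < d)%nat ->
  partial (kern d kappa) j y = G1 d ((2 * kappa) ^ 2 * Sq d y) * ((2 * kappa) ^ 2 * (2 * y j)).
Proof.
  intro Hj. unfold partial. apply is_derive_unique.
  eapply is_derive_ext; [|apply (comp_deriv (G0 d) (G1 d)); [apply dG0|exact Hj]].
  intro h. cbv beta. rewrite kern_eq. reflexivity.
Qed.

Lemma P2 d kappa i j t : (i < d)%nat -> (j < d)%nat ->
  partial (fun y => partial (kern d kappa) j y) i t =
  G2 d ((2 * kappa) ^ 2 * Sq d t) * ((2 * kappa) ^ 2 * (2 * t i)) * ((2 * kappa) ^ 2 * (2 * t j))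
  + G1 d ((2 * kappa) ^ 2 * Sq d t) * ((2 * kappa) ^ 2 * 2 * (if Nat.eqb j i then 1 else 0)).
Proof.
  intros Hi Hj. unfold partial at 1.
  rewrite (Derive_ext _ (fun h => G1 d ((2 * kappa) ^ 2 * sumd d (fun k => (if Nat.eqb k i then t k + h else t k) ^ 2))
       * ((2 * kappa) ^ 2 * (2 * (if Nat.eqb j i then t j + h else t j))))).
  2: { intro h. rewrite P1 by exact Hj. reflexivity. }
  apply is_derive_unique.
  assert (H1 := comp_deriv (G1 d) (G2 d) ((2 * kappa) ^ 2) d i t (dG1 d) Hi).
  assert (H2 : is_derive (fun h => (2 * kappa) ^ 2 * (2 * (if Nat.eqb j i then t j + h else t j))) 0
                 ((2 * kappa) ^ 2 * 2 * (if Nat.eqb j i then 1 else 0))).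
  { destruct (Nat.eqb j i); auto_derive; auto; ring. }
  pose proof (is_derive_mult _ _ 0 _ _ H1 H2 ltac:(intros; apply Rmult_comm)) as H.
  cbv beta in H.
  match type of H with is_derive _ _ ?l =>
    match goal with |- is_derive _ _ ?l' => replace l' with l; [exact H|] end end.
  match goal with |- ?a = ?b => change (@eq R a b) end.
  change (mult ?a ?b) with (a * b). change (plus ?a ?b) with (a + b).
  rewrite S_shift. apply Nat.ltb_lt in Hi. rewrite Hi.
  replace (Sq d t + (2 * 0 * t i + 0 ^ 2)) with (Sq d t) by ring.
  destruct (Nat.eqb_spec j i). subst. ring. ring.
Qed.

Lemma final_alg (c g1 g2 W P T D p1 p2 : R) :
  0 < c -> 0 <= W -> 0 <= T -> P ^ 2 <= T * W -> 2 <= D -> c ^ 2 * T <= D / 5 ->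
  p1 = / (2 * D) -> p2 = / (8 * D * (D + 2)) ->
  p1 - 2 * p2 * (c ^ 2 * T) <= - g1 -> g2 <= 2 * p2 ->
  - (2 * c ^ 2 * g1 * W + 4 * c ^ 4 * g2 * P ^ 2) >= 6 / 10 * (c ^ 2 * W / D).
Proof.
  intros Hc HW HT HP HD Hu Hp1 Hp2 Hg1 Hg2.
  set (u := c ^ 2 * T) in *.
  assert (Hc2 : 0 < c ^ 2) by (apply pow_lt; lra).
  assert (Hp2pos : 0 < p2) by (rewrite Hp2; apply Rinv_0_lt_compat; nra).
  assert (A1 : - (2 * c ^ 2 * g1 * W) >= 2 * c ^ 2 * W * (p1 - 2 * p2 * u)).
  { assert (0 <= 2 * c ^ 2 * W) by nra. nra. }
  assert (A2 : 4 * c ^ 4 * g2 * P ^ 2 <= 8 * p2 * u * c ^ 2 * W).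
  { destruct (Rle_dec g2 0).
    - assert (0 <= P ^ 2) by (apply pow2_ge_0). assert (0 < c ^ 4) by (apply pow_lt; lra).
      assert (0 <= 8 * p2 * u * c ^ 2 * W).
      { unfold u. repeat apply Rmult_le_pos; nra. }
      assert (4 * c ^ 4 * g2 * P ^ 2 <= 0).
      { replace (4 * c ^ 4 * g2 * P ^ 2) with (- (4 * c ^ 4 * P ^ 2 * (- g2))) by ring.
        assert (0 <= 4 * c ^ 4 * P ^ 2 * - g2) by (apply Rmult_le_pos; [apply Rmult_le_pos|]; lra). lra. }
      lra.
    - assert (0 < c ^ 4) by (apply pow_lt; lra).
      assert (4 * c ^ 4 * g2 * P ^ 2 <= 4 * c ^ 4 * g2 * (T * W)).
      { apply Rmult_le_compat_l; [|exact HP]. assert (0 < 4 * c ^ 4 * g2) by nra. lra. }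
      assert (4 * c ^ 4 * g2 * (T * W) <= 4 * c ^ 4 * (2 * p2) * (T * W)).
      { apply Rmult_le_compat_r; [nra|]. apply Rmult_le_compat_l; nra. }
      replace (8 * p2 * u * c ^ 2 * W) with (4 * c ^ 4 * (2 * p2) * (T * W)) by (unfold u; ring).
      lra. }
  assert (K : 2 * c ^ 2 * W * (p1 - 2 * p2 * u) - 8 * p2 * u * c ^ 2 * W >= 6 / 10 * (c ^ 2 * W / D)).
  { rewrite Hp1, Hp2.
    replace (2 * c ^ 2 * W * (/ (2 * D) - 2 * / (8 * D * (D + 2)) * u) - 8 * / (8 * D * (D + 2)) * u * c ^ 2 * W)
      with (c ^ 2 * W / D * (1 - 3 / 2 * u / (D + 2))) by (field; lra).
    assert (0 <= c ^ 2 * W / D) by (unfold Rdiv; apply Rmult_le_pos; [nra|left; apply Rinv_0_lt_compat; lra]).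
    assert (3 / 2 * u / (D + 2) <= 4 / 10).
    { unfold Rdiv. apply Rmult_le_reg_r with (D + 2). lra.
      rewrite Rmult_assoc, Rinv_l by lra. lra. }
    nra. }
  lra.
Qed.

Theorem lemma3 (d : nat) (Hd : d = 2%nat \/ d = 3%nat) (kappa : R) (Hkappa : 0 < kappa)
  (x x' v : nat -> R) :
  fdist d kappa x x' <= 1 / sqrt 5 ->
  - hess_form d (kern d kappa) (vsub x x') v >= (6 / 10) * (fnorm d kappa v) ^ 2.
Proof.
  intro Hf.
  set (t := vsub x x') in *.
  set (c := 2 * kappa).
  set (T := Sq d t). set (W := Sq d v).
  set (P := sumd d (fun i => t i * v i)).
  set (u := c ^ 2 * T).
  set (nu := INR d / 2).
  set (D := INR d + 2).
  assert (Hc : 0 < c) by (unfold c; lra).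
  assert (HD : 2 <= D) by (unfold D; destruct Hd; subst; simpl; lra).
  assert (HD5 : D <= 5) by (unfold D; destruct Hd; subst; simpl; lra).
  assert (Hnu : 0 <= nu) by (unfold nu; pose proof (pos_INR d); lra).
  assert (HT : 0 <= T) by apply Sq_nonneg.
  assert (HW : 0 <= W) by apply Sq_nonneg.
  assert (Hh : hess_form d (kern d kappa) t v
     = 2 * c ^ 2 * G1 d u * W + 4 * c ^ 4 * G2 d u * P ^ 2).
  { unfold hess_form.
    rewrite (sumd_ext d _ (fun i => sumd d (fun j => v i * v j *
       (G2 d u * (c ^ 2 * (2 * t i)) * (c ^ 2 * (2 * t j))
        + G1 d u * (c ^ 2 * 2 * (if Nat.eqb j i then 1 else 0)))))).
    2: { intros i Hi. apply sumd_ext. intros j Hj. rewrite P2 by auto. reflexivity. }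
    set (g1 := G1 d u). set (g2 := G2 d u).
    unfold W, P, Sq. clearbody g1 g2.
    destruct Hd; subst d; cbn [sumd Nat.eqb]; ring. }
  assert (HP : P ^ 2 <= T * W).
  { unfold P, T, W, Sq. destruct Hd; subst d; cbn [sumd].
    - assert (0 <= (t 0%nat * v 1%nat - t 1%nat * v 0%nat) ^ 2) by apply pow2_ge_0. nra.
    - assert (0 <= (t 0%nat * v 1%nat - t 1%nat * v 0%nat) ^ 2) by apply pow2_ge_0.
      assert (0 <= (t 0%nat * v 2%nat - t 2%nat * v 0%nat) ^ 2) by apply pow2_ge_0.
      assert (0 <= (t 1%nat * v 2%nat - t 2%nat * v 1%nat) ^ 2) by apply pow2_ge_0. nra. }
  assert (Hu : u <= D / 5).
  { unfold fdist in Hf. fold c D in Hf.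
    change (vnorm d (vsub x x')) with (sqrt T) in Hf.
    assert (HsD : 0 < sqrt D) by (apply sqrt_lt_R0; lra).
    assert (A0 : 0 <= c * sqrt T / sqrt D).
    { unfold Rdiv. apply Rmult_le_pos. apply Rmult_le_pos. lra. apply sqrt_pos.
      left; apply Rinv_0_lt_compat; lra. }
    assert (A2 : (c * sqrt T / sqrt D) ^ 2 <= (1 / sqrt 5) ^ 2).
    { apply pow_incr. lra. }
    replace ((c * sqrt T / sqrt D) ^ 2) with (u / D) in A2.
    2: { unfold u. unfold Rdiv. rewrite !Rpow_mult_distr, pow2_sqrt by lra.
         rewrite pow_inv, pow2_sqrt by lra. reflexivity. }
    replace ((1 / sqrt 5) ^ 2) with (/ 5) in A2.
    2: { unfold Rdiv. rewrite Rpow_mult_distr, pow_inv, pow2_sqrt by lra. ring. }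
    apply Rmult_le_reg_r with (/ D). apply Rinv_0_lt_compat; lra.
    replace (D / 5 * / D) with (/ 5) by (field; lra). exact A2. }
  assert (Hn : fnorm d kappa v ^ 2 = c ^ 2 * W / D).
  { unfold fnorm. fold c D. change (vnorm d v) with (sqrt W).
    unfold Rdiv. rewrite !Rpow_mult_distr, pow2_sqrt by lra.
    rewrite pow_inv, pow2_sqrt by lra. reflexivity. }
  rewrite Hh, Hn.
  assert (Hu4 : 0 <= u <= 4).
  { split. unfold u. apply Rmult_le_pos; [apply pow_le; lra|lra]. lra. }
  pose proof (G1_bound nu u Hnu Hu4) as B1.
  pose proof (G2_bound nu u Hnu Hu4) as B2.
  change (PSeries (PS_derive (ac nu)) u) with (G1 d u) in B1.
  change (PSeries (PS_derive (PS_derive (ac nu))) u) with (G2 d u) in B2.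
  apply (final_alg c (G1 d u) (G2 d u) W P T D (pc nu 1) (pc nu 2)); auto.
  - rewrite pc1 by auto. unfold nu, D. field. pose proof (pos_INR d). lra.
  - rewrite pc2 by auto. unfold nu, D. field. pose proof (pos_INR d). lra.
Qed.
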